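(* Assume the setting and the algorithm FDGM-AA described in the context, with $\beta\in(0,1/L)$. Then for every $k\ge0$, $\sum_{i\in\mathcal V}w_i^{k}=0$ and $$ D(\mathbf w^{k+1})-D(\mathbf w^k)\le-\theta_1\sum_{\{i,j\}\in\mathcal E^k}h_{ij}^k\big\|\nabla d_i(w_i^k)-\nabla d_j(w_j^k)\big\|^2, $$ where $\theta_1=\min\{\beta(1-\beta L),c_1\}$. In particular $\{D(\mathbf w^k)\}_{k\ge0}$ is non-increasing.
   Context: Setting. Let $n,d\ge 1$ be integers and $\mathcal V=\{1,\dots,n\}$. For each $i\in\mathcal V$, $f_i:\mathbb R^d\to\mathbb R\cup\{+\infty\}$ is proper, lower semicontinuous and $\mu$-strongly convex for some $\mu>0$ (i.e. $f_i-\frac{\mu}{2}\|\cdot\|^2$ is convex), and the interior of $\bigcap_{i\in\mathcal V}\mathrm{dom} f_i$ is nonempty. Let $d_i(w)=\sup_{x\in\mathbb R^d}\{\langle w,x\rangle-f_i(x)\}$ be the convex conjugate of $f_i$; it is differentiable with $L$-Lipschitz gradient where $L=1/\mu$, and $\nabla d_i(w)=\arg\max_x\{\langle w,x\rangle-f_i(x)\}$. For $\mathbf w=(w_1,\dots,w_n)\in(\mathbb R^d)^n$ put $D(\mathbf w)=\sum_{i\in\mathcal V}d_i(w_i)$. Networks. $\mathcal G^k=(\mathcal V,\mathcal E^k)$, $k\ge0$, is a sequence of undirected graphs; $\mathcal N_i^k=\{j:\{i,j\}\in\mathcal E^k\}$. For each $\{i,j\}\in\mathcal E^k$ a weight $h_{ij}^k=h_{ji}^k>0$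 is given, with $\underline h:=\inf_{k\ge0}\min_{\{i,j\}\in\mathcal E^k}h_{ij}^k>0$ and $\sum_{j\in\mathcal N_i^k}h_{ij}^k\le 1$ for all $i,k$. Algorithm FDGM-AA. Parameters: step-size $\beta>0$, constants $c_1,c_2>0$, integer memory $m\ge1$. Initial point $w_1^0,\dots,w_n^0\in\mathbb R^d$ with $\sum_i w_i^0=0$. At iteration $k\ge0$, for each edge $\{i,j\}\in\mathcal E^k$: let $\mathcal I_{ij}^k=\mathcal I_{ji}^k$ be the set of the $\min\{m,N\}$ largest indices $t\le k$ with $\{i,j\}\in\mathcal E^t$, where $N$ is the number of such $t$ (so $k\in\mathcal I_{ij}^k$). Let $W_{ij}^k$ and $D_{ij}^k$ be the $d\times|\mathcal I_{ij}^k|$ matrices with columns $w_i^t$ and $\nabla d_i(w_i^t)$, $t\in\mathcal I_{ij}^k$, and define $W_{ji}^k$, $D_{ji}^k$ analogously with $w_j^t$, $\nabla d_j(w_j^t)$. Let $(\alpha_{ij}^k,\alpha_{ji}^k)$ be any minimizer of $\|D_{ij}^k\alpha_{ij}-D_{ji}^k\alpha_{ji}\|^2$ subject to $W_{ij}^k\alpha_{ij}+W_{ji}^k\alpha_{ji}=w_i^k+w_j^k$, $\mathbf 1^T\alpha_{ij}=1$, $\mathbf 1^T\alpha_{ji}=1$. Set $\tilde w_{ij}=W_{ij}^k\alpha_{ij}^k$, $\tilde w_{ji}=W_{ji}^k\alpha_{ji}^k$, $\bar w_{ij}=\tilde w_{ij}-\beta(D_{ij}^k\alpha_{ij}^k-D_{ji}^k\alpha_{ji}^k)$,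 $\bar w_{ji}=\tilde w_{ji}-\beta(D_{ji}^k\alpha_{ji}^k-D_{ij}^k\alpha_{ij}^k)$. Let $g=\nabla d_i(w_i^k)-\nabla d_j(w_j^k)$ and $\rho=\min\{-c_1\|g\|^2,\,-c_2(\|\bar w_{ij}-w_i^k\|^2+\|\bar w_{ji}-w_j^k\|^2)\}$. Safe-guard test (one of the following two, fixed for the whole run): (S1) $d_i(\bar w_{ij})+d_j(\bar w_{ji})-d_i(w_i^k)-d_j(w_j^k)\le\rho$; or (S2) $\langle\nabla d_i(w_i^k),\bar w_{ij}-w_i^k\rangle+\frac L2\|\bar w_{ij}-w_i^k\|^2+\langle\nabla d_j(w_j^k),\bar w_{ji}-w_j^k\rangle+\frac L2\|\bar w_{ji}-w_j^k\|^2\le\rho$. If the test holds, set $(w_{ij}^{k+\frac12},w_{ji}^{k+\frac12})=(\bar w_{ij},\bar w_{ji})$; otherwise set $w_{ij}^{k+\frac12}=w_i^k-\beta g$, $w_{ji}^{k+\frac12}=w_j^k+\beta g$. Finally, for every $i\in\mathcal V$, $w_i^{k+1}=(1-\sum_{j\in\mathcal N_i^k}h_{ij}^k)w_i^k+\sum_{j\in\mathcal N_i^k}h_{ij}^k w_{ij}^{k+\frac12}$. Write $\mathbf w^k=(w_1^k,\dots,w_n^k)$ and $x_i^k=\nabla d_i(w_i^k)$. *)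

(* Defs.v *)
From HB Require Import structures.
From mathcomp Require Import all_boot all_order all_algebra.
From mathcomp Require Import all_classical all_reals all_analysis.
Set Implicit Arguments. Unset Strict Implicit. Unset Printing Implicit Defensive.
Import Order.TTheory GRing.Theory Num.Theory.
Import numFieldNormedType.Exports.
Local Open Scope classical_set_scope.
Local Open Scope ring_scope.

Definition dotv (R : realType) (d : nat) (u v : 'rV[R]_d) : R :=
  \sum_(l < d) u 0 l * v 0 l.
Definition sqnorm (R : realType) (d : nat) (u : 'rV[R]_d) : R := dotv u u.
Definition enorm (R : realType) (d : nat) (u : 'rV[R]_d) : R := Num.sqrt (sqnorm u).

Definition proper_fun (R : realType) (d : nat) (f : 'rV[R]_d -> \bar R) : Prop :=
  (exists x, (f x < +oo)%E) /\ (forall x, (-oo < f x)%E).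

Definition lsc_fun (R : realType) (d : nat) (f : 'rV[R]_d -> \bar R) : Prop :=
  forall (x : 'rV[R]_d) (a : R), (a%:E < f x)%E -> \forall y \near x, (a%:E < f y)%E.

Definition strongly_convex (R : realType) (d : nat) (mu : R) (f : 'rV[R]_d -> \bar R) : Prop :=
  let g := fun x => (f x - (mu / 2 * sqnorm x)%:E)%E in
  forall (x y : 'rV[R]_d) (t : R), 0 < t < 1 ->
    (g (t *: x + (1 - t) *: y)%R <= t%:E * g x + (1 - t)%R%:E * g y)%E.

Definition domf (R : realType) (d : nat) (f : 'rV[R]_d -> \bar R) : set 'rV[R]_d :=
  [set x | (f x < +oo)%E].

(* convex conjugate d(w) = sup_x <w,x> - f(x) (finite under the standing assumptions) *)
Definition conjf (R : realType) (d : nat) (f : 'rV[R]_d -> \bar R) (w : 'rV[R]_d) : R :=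
  fine (ereal_sup [set ((dotv w x)%:E - f x)%E | x in [set: 'rV[R]_d]]).

(* grad d(w) = argmax_x { <w,x> - f(x) } *)
Definition gradconj (R : realType) (d : nat) (f : 'rV[R]_d -> \bar R) (w : 'rV[R]_d)
  : 'rV[R]_d :=
  xget 0 [set x | forall y, ((dotv w y)%:E - f y <= (dotv w x)%:E - f x)%E].

Definition Dfun (R : realType) (n d : nat) (f : 'I_n -> 'rV[R]_d -> \bar R)
  (w : 'I_n -> 'rV[R]_d) : R := \sum_(i < n) conjf (f i) (w i).

(* I_ij^k : the min{m,N} largest t <= k with {i,j} in E^t *)
Definition mem_idx (n : nat) (adj : nat -> 'I_n -> 'I_n -> bool) (m k : nat)
  (i j : 'I_n) : seq nat :=
  take m [seq t <- rev (iota 0 k.+1) | adj t i j].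

(* feasibility of (a_ij, a_ji) for the AA subproblem of edge {i,j} at iteration k;
   coefficient vectors indexed by t in I_ij^k are represented as functions nat -> R *)
Definition aa_feasible (R : realType) (n d : nat) (adj : nat -> 'I_n -> 'I_n -> bool)
  (m : nat) (w : nat -> 'I_n -> 'rV[R]_d) (k : nat) (i j : 'I_n) (a b : nat -> R) : Prop :=
  let I := mem_idx adj m k i j in
  \sum_(t <- I) a t *: w t i + \sum_(t <- I) b t *: w t j = w k i + w k j
  /\ \sum_(t <- I) a t = 1 /\ \sum_(t <- I) b t = 1.

Definition aa_objective (R : realType) (n d : nat) (f : 'I_n -> 'rV[R]_d -> \bar R)
  (adj : nat -> 'I_n -> 'I_n -> bool) (m : nat) (w : nat -> 'I_n -> 'rV[R]_d)
  (k : nat) (i j : 'I_n) (a b : nat -> R) : R :=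
  let I := mem_idx adj m k i j in
  sqnorm (\sum_(t <- I) a t *: gradconj (f i) (w t i)
          - \sum_(t <- I) b t *: gradconj (f j) (w t j)).

Definition aa_minimizer (R : realType) (n d : nat) (f : 'I_n -> 'rV[R]_d -> \bar R)
  (adj : nat -> 'I_n -> 'I_n -> bool) (m : nat) (w : nat -> 'I_n -> 'rV[R]_d)
  (k : nat) (i j : 'I_n) (a b : nat -> R) : Prop :=
  aa_feasible adj m w k i j a b /\
  forall a' b', aa_feasible adj m w k i j a' b' ->
    aa_objective f adj m w k i j a b <= aa_objective f adj m w k i j a' b'.

(* w_ij^{k+1/2}, computed with a = alpha_ij^k and b = alpha_ji^k.
   safeS1 = true : test (S1);  safeS1 = false : test (S2). *)
Definition half_step (R : realType) (n d : nat) (f : 'I_n -> 'rV[R]_d -> \bar R)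
  (L beta c1 c2 : R) (safeS1 : bool)
  (adj : nat -> 'I_n -> 'I_n -> bool) (m : nat) (w : nat -> 'I_n -> 'rV[R]_d)
  (k : nat) (i j : 'I_n) (a b : nat -> R) : 'rV[R]_d :=
  let I := mem_idx adj m k i j in
  let wt_ij := \sum_(t <- I) a t *: w t i in
  let wt_ji := \sum_(t <- I) b t *: w t j in
  let D_ij := \sum_(t <- I) a t *: gradconj (f i) (w t i) in
  let D_ji := \sum_(t <- I) b t *: gradconj (f j) (w t j) in
  let wb_ij := wt_ij - beta *: (D_ij - D_ji) in
  let wb_ji := wt_ji - beta *: (D_ji - D_ij) in
  let xi := gradconj (f i) (w k i) in
  let xj := gradconj (f j) (w k j) in
  let g := xi - xj in
  let rho := Num.min (- (c1 * sqnorm g))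
                     (- (c2 * (sqnorm (wb_ij - w k i) + sqnorm (wb_ji - w k j)))) in
  let test :=
    if safeS1 then
      conjf (f i) wb_ij + conjf (f j) wb_ji - conjf (f i) (w k i) - conjf (f j) (w k j)
        <= rho
    else
      dotv xi (wb_ij - w k i) + L / 2 * sqnorm (wb_ij - w k i)
      + dotv xj (wb_ji - w k j) + L / 2 * sqnorm (wb_ji - w k j) <= rho in
  if test then wb_ij else w k i - beta *: g.

(* Main.v *)
Require Import Defs.
From HB Require Import structures.
From mathcomp Require Import all_boot all_order all_algebra.
From mathcomp Require Import all_classical all_reals all_analysis.
From mathcomp Require Import ring lra.
Unset Printing Implicit Defensive.
Import Order.TTheory GRing.Theory Num.Theory.
Import numFieldNormedType.Exports.
Local Open Scope classical_set_scope.
Local Open Scope ring_scope.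
Lemma seq_argmin (T : eqType) (R : realType) (G : T -> \bar R) (s : seq T) (x0 : T) :
  x0 \in s -> exists2 x, x \in s & forall y, y \in s -> (G x <= G y)%E.
Proof.
elim: s x0 => [//|a s IH] x0 _.
case: s IH => [_|b s IH].
  by exists a; [rewrite inE eqxx | move=> y; rewrite inE => /eqP ->].
have [x xs Hx] := IH b (mem_head b s).
case: (leP (G a) (G x)) => H.
  exists a; first by rewrite inE eqxx.
  move=> y; rewrite inE => /orP [/eqP ->//|/Hx]; exact: le_trans.
exists x; first by rewrite inE xs orbT.
by move=> y; rewrite inE => /orP [/eqP ->|/Hx//]; exact: ltW.
Qed.

Module LscMin.
Import finmap.
Lemma lsc_min_compact (T : ptopologicalType) (R : realType) (K : set T) (F : T -> \bar R) :
  compact K -> K !=set0 -> (forall x, (-oo < F x)%E) ->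
  (forall x (a : R), (a%:E < F x)%E -> \forall y \near x, (a%:E < F y)%E) ->
  exists2 x, K x & forall y, K y -> (F x <= F y)%E.
Proof.
move=> cK [k0 Kk0] Fninf lscF.
apply: contrapT => Hno.
have Hex : forall x, K x -> exists y, K y /\ (F y < F x)%E.
  move=> x Kx; apply: contrapT => Hn; apply: Hno; exists x => // y Ky.
  rewrite leNgt; apply/negP => Hlt; apply: Hn; by exists y.
pose yo x := xget k0 [set y | K y /\ (F y < F x)%E].
have yoP : forall x, K x -> K (yo x) /\ (F (yo x) < F x)%E.
  move=> x Kx; rewrite /yo; case: xgetP => //= H.
  by have [y Hy] := Hex x Kx; case: (H y).
pose U x := interior [set z | ((fine (F (yo x)))%:E < F z)%E].
have Uo : forall x, K x -> open (U x) by move=> x _; exact: open_interior.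
have KU : K `<=` cover K U.
  move=> x Kx; exists x => //; rewrite /U /interior /=.
  apply: lscF; have [_ H] := yoP x Kx.
  have fin : F (yo x) \is a fin_num.
    rewrite fin_numE; apply/andP; split; first by rewrite gt_eqF // Fninf.
    by rewrite lt_eqF // (lt_le_trans H) // leey.
  by rewrite fineK.
move: cK; rewrite compact_cover => /(_ T K U Uo KU) [D' sD' KD'].
have [x1 x1D'] : exists x : T, x \in D'.
  have [x [xD' _]] := KD' k0 Kk0; by exists x.
have [x xD' Hx] := @seq_argmin _ _ (fun x => F (yo x)) _ _ x1D'.
have Kx : K x by have := sD' x xD'; rewrite in_setE.
have [Kyx _] := yoP x Kx.
have [x' x'D' Ux'] := KD' _ Kyx.
have x'D : x' \in D' by [].
have Kx' : K x' by have := sD' x' x'D; rewrite in_setE.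
have := interior_subset Ux'; rewrite /= => H1.
have [_ H2] := yoP x' Kx'.
have fin : F (yo x') \is a fin_num.
  rewrite fin_numE; apply/andP; split; first by rewrite gt_eqF // Fninf.
  by rewrite lt_eqF // (lt_le_trans H2) // leey.
rewrite fineK // in H1.
have := Hx x' x'D; by rewrite leNgt H1.
Qed.
End LscMin.
Import LscMin.

Section Dot.
Context {R : realType} {d : nat}.
Implicit Types u v x : 'rV[R]_d.
Lemma dotvC u v : dotv u v = dotv v u.
Proof. by apply: eq_bigr => l _; rewrite mulrC. Qed.
Lemma dotvDl u v x : dotv (u + v) x = dotv u x + dotv v x.
Proof. by rewrite /dotv -big_split; apply: eq_bigr => l _; rewrite mxE mulrDl. Qed.
Lemma dotvZl a u x : dotv (a *: u) x = a * dotv u x.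
Proof. by rewrite /dotv mulr_sumr; apply: eq_bigr => l _; rewrite mxE mulrA. Qed.
Lemma dotvNl u x : dotv (- u) x = - dotv u x.
Proof. by rewrite /dotv -sumrN; apply: eq_bigr => l _; rewrite mxE mulNr. Qed.
Lemma dotvBl u v x : dotv (u - v) x = dotv u x - dotv v x.
Proof. by rewrite dotvDl dotvNl. Qed.
Lemma dotvDr u v x : dotv x (u + v) = dotv x u + dotv x v.
Proof. by rewrite dotvC dotvDl !(dotvC x). Qed.
Lemma dotvZr a u x : dotv x (a *: u) = a * dotv x u.
Proof. by rewrite dotvC dotvZl dotvC. Qed.
Lemma dotvNr u x : dotv x (- u) = - dotv x u.
Proof. by rewrite dotvC dotvNl dotvC. Qed.
Lemma dotvBr u v x : dotv x (u - v) = dotv x u - dotv x v.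
Proof. by rewrite dotvDr dotvNr. Qed.
Lemma dotv0l x : dotv 0 x = 0.
Proof. by rewrite /dotv big1 // => l _; rewrite mxE mul0r. Qed.
Lemma dotv_suml (I : Type) (s : seq I) (P : pred I) (F : I -> 'rV[R]_d) x :
  dotv (\sum_(j <- s | P j) F j) x = \sum_(j <- s | P j) dotv (F j) x.
Proof.
elim/big_rec2: _ => [|j a b _ <-]; first exact: dotv0l.
by rewrite dotvDl.
Qed.
Lemma sqnorm_ge0 u : 0 <= sqnorm u.
Proof. by apply: sumr_ge0 => l _; rewrite -expr2 sqr_ge0. Qed.
Lemma sqnormD u v : sqnorm (u + v) = sqnorm u + 2 * dotv u v + sqnorm v.
Proof. rewrite /sqnorm !dotvDl !dotvDr (dotvC v u); ring. Qed.
Lemma sqnormB u v : sqnorm (u - v) = sqnorm u - 2 * dotv u v + sqnorm v.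
Proof. rewrite /sqnorm !dotvDl !dotvDr !dotvNl !dotvNr opprK (dotvC v u); ring. Qed.
Lemma sqnormZ a u : sqnorm (a *: u) = a ^+ 2 * sqnorm u.
Proof. by rewrite /sqnorm dotvZl dotvZr mulrA expr2. Qed.
Lemma sqnormN u : sqnorm (- u) = sqnorm u.
Proof. by rewrite /sqnorm dotvNl dotvNr opprK. Qed.
Lemma sqnormBC u v : sqnorm (u - v) = sqnorm (v - u).
Proof. by rewrite -sqnormN opprB. Qed.
Lemma coord_le_sqnorm u l : u 0 l ^+ 2 <= sqnorm u.
Proof.
rewrite /sqnorm /dotv (bigD1 l) //= -expr2 lerDl.
by apply: sumr_ge0 => j _; rewrite -expr2 sqr_ge0.
Qed.
Lemma dot_le_young c u v : 0 < c -> dotv u v <= c / 2 * sqnorm v + sqnorm u / (2 * c).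
Proof.
move=> c0.
have := sqnorm_ge0 (u - c *: v); rewrite sqnormB sqnormZ dotvZr => H.
have e : c / 2 * sqnorm v + sqnorm u / (2 * c) - dotv u v
   = (sqnorm u - 2 * (c * dotv u v) + c ^+ 2 * sqnorm v) / (2 * c).
  by field; rewrite gt_eqF.
rewrite -subr_ge0 e; apply: divr_ge0 => //; lra.
Qed.
End Dot.

Section Exist.
Variables (R : realType) (d : nat).
Local Notation V := 'rV[R]_d.

Lemma dotv_cont (w : V) : continuous (fun y : V => dotv w y).
Proof.
move=> y; rewrite /dotv.
elim: (index_enum _) => [|l s IH].
  under eq_fun do rewrite big_nil; exact: cst_continuous.
under eq_fun do rewrite big_cons.
apply: (@continuousD _ _ _ (fun y : V => w 0 l * y 0 l) (fun y => \sum_(j <- s | true) w 0 j * y 0 j)) => //.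
apply: (@continuousM _ _ (fun _ => w 0 l) (fun y : V => y 0 l)).
  exact: cst_continuous.
exact: coord_continuous.
Qed.

Lemma lsc_shift (f : V -> \bar R) (w : V) :
  (forall x, (-oo < f x)%E) -> lsc_fun f ->
  forall x (a : R), (a%:E < f x - (dotv w x)%:E)%E ->
    \forall y \near x, (a%:E < f y - (dotv w y)%:E)%E.
Proof.
move=> Hninf Hl x a Ha.
have [e e0 He] : exists2 e : R, 0 < e & ((a + dotv w x + 2 * e)%:E < f x)%E.
  case Efx : (f x) => [r| |] //.
  - exists ((r - dotv w x - a) / 4).
      rewrite Efx in Ha; rewrite -EFinB lte_fin in Ha. apply: divr_gt0 => //; lra.
    rewrite Efx -EFinB lte_fin in Ha; rewrite lte_fin; lra.
  - by exists 1 => //; rewrite ltry.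
  - by have := Hninf x; rewrite Efx.
have := Hl x (a + dotv w x + e).
have H1 : ((a + dotv w x + e)%:E < f x)%E.
  by apply: lt_trans He; rewrite lte_fin; lra.
move=> /(_ H1) Hn.
have := dotv_cont w x => /cvgrPdist_lt /(_ e e0) Hc.
apply: (@filterS2 _ _ _ _ _ _ _ Hn Hc) => y Ay By.
have Hcy : dotv w y < dotv w x + e.
  by move: By; rewrite ltr_norml; move=> /ssrbool.andP[? ?]; lra.
case Efy : (f y) => [r| |] //.
- rewrite Efy lte_fin in Ay; rewrite -EFinB lte_fin; lra.
- by rewrite ltry.
- by have := Hninf y; rewrite Efy.
Qed.


Lemma box_compact (a b : 'I_d -> R) :
  compact [set v : V | forall i, `[a i, b i]%classic (v 0 i)].
Proof. exact: (rV_compact (fun i => @segment_compact R (a i) (b i))). Qed.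

Lemma abs_coord_le (u : V) l : `|u 0 l| <= enorm u.
Proof. rewrite /enorm -sqrtr_sqr; apply: ler_wsqrtr; exact: coord_le_sqnorm. Qed.

Lemma enorm_ge0 (u : V) : 0 <= enorm u.
Proof. exact: sqrtr_ge0. Qed.

Lemma enorm_sq (u : V) : enorm u ^+ 2 = sqnorm u.
Proof. by rewrite /enorm sqr_sqrtr // sqnorm_ge0. Qed.

Variables (f : V -> \bar R) (mu : R).
Hypotheses (mu0 : 0 < mu) (Hp : proper_fun f) (Hl : lsc_fun f) (Hc : strongly_convex mu f).

Lemma Hninf x : (-oo < f x)%E.
Proof. by case: Hp. Qed.

Lemma finE x : (f x < +oo)%E -> f x = (fine (f x))%:E.
Proof.
move=> H; rewrite fineK // fin_numE; apply/ssrbool.andP; split.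
  by rewrite gt_eqF // Hninf.
by rewrite lt_eqF.
Qed.

Lemma f_lb_box (x1 : V) : exists M : R, forall z : V,
  (forall l, `|z 0 l - x1 0 l| <= 1) -> (M%:E <= f z)%E.
Proof.
have cK := box_compact (fun l => x1 0 l - 1) (fun l => x1 0 l + 1).
have ne : [set v : V | forall i, `[x1 0 i - 1, x1 0 i + 1]%classic (v 0 i)] !=set0.
  exists x1 => i /=; rewrite in_itv /=; apply/ssrbool.andP; split; lra.
have [xm Kxm Hm] := @lsc_min_compact _ _ _ _ cK ne Hninf Hl.
have inK : forall z : V, (forall l, `|z 0 l - x1 0 l| <= 1) ->
    [set v : V | forall i, `[x1 0 i - 1, x1 0 i + 1]%classic (v 0 i)] z.
  move=> z Hz i /=; rewrite in_itv /=; have := Hz i; rewrite ler_norml.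
  by move=> /ssrbool.andP[? ?]; apply/ssrbool.andP; split; lra.
case Efxm : (f xm) => [r| |].
- by exists r => z /inK /Hm; rewrite Efxm.
- by exists 0 => z /inK /Hm; rewrite Efxm leye_eq => /eqP ->; rewrite leey.
- by have := Hninf xm; rewrite Efxm.
Qed.


Lemma quad_lb (x1 : V) : (f x1 < +oo)%E -> exists Aq : R, forall y : V, (f y < +oo)%E ->
  Aq - mu / 8 * sqnorm (y - x1) + mu / 2 * sqnorm y <= fine (f y).
Proof.
move=> fx1.
have [M HM] := f_lb_box x1.
pose Q := \sum_(l < d) (`|x1 0 l| + 1) ^+ 2.
have HQ : forall z : V, (forall l, `|z 0 l - x1 0 l| <= 1) -> sqnorm z <= Q.
  move=> z Hz; rewrite /sqnorm /dotv /Q; apply: ler_sum => l _.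
  have h1 : z 0 l * z 0 l <= `|z 0 l| * `|z 0 l| by rewrite -normrM ler_norm.
  have h2 : `|z 0 l| <= `|x1 0 l| + 1.
    have := ler_normD (z 0 l - x1 0 l) (x1 0 l); rewrite subrK; have := Hz l; lra.
  have h3 := normr_ge0 (z 0 l).
  rewrite expr2; nra.
pose Mg := M - mu / 2 * Q.
have f1E := finE _ fx1.
pose gx1 := fine (f x1) - mu / 2 * sqnorm x1.
have gx1Mg : Mg <= gx1.
  have H0 : forall l, `|x1 0 l - x1 0 l| <= 1 by move=> l; rewrite subrr normr0.
  have := HM x1 H0; rewrite f1E lee_fin => h1.
  have h2 := HQ x1 H0.
  have : mu / 2 * sqnorm x1 <= mu / 2 * Q by apply: ler_wpM2l; [rewrite divr_ge0 // ltW | exact: h2].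
  rewrite /gx1 /Mg; lra.
pose C := gx1 - Mg.
pose A := 2 * Mg - gx1.
exists (A - 2 * C ^+ 2 / mu) => y fy.
have fyE := finE _ fy.
pose rho := enorm (y - x1).
have rho0 : 0 <= rho := enorm_ge0 _.
pose t := (2 + rho)^-1.
have t0 : 0 < t by rewrite /t invr_gt0; lra.
have t1 : t < 1 by rewrite /t invf_lt1; lra.
pose z := t *: y + (1 - t) *: x1.
have Hz : forall l, `|z 0 l - x1 0 l| <= 1.
  move=> l.
  have -> : z 0 l - x1 0 l = t * (y - x1) 0 l by rewrite /z !mxE; ring.
  rewrite normrM (gtr0_norm t0).
  have := abs_coord_le (y - x1) l; rewrite -/rho => h.
  have ht : t * (2 + rho) = 1 by rewrite /t mulVf // gt_eqF //; lra.
  have : t * `|(y - x1) 0 l| <= t * rho by rewrite ler_pM2l.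
  nra.
have := Hc y x1 t; rewrite t0 t1 => /(_ isT).
rewrite -/z fyE f1E -!EFinB -!EFinM -EFinD => Hcv.
have fz : (f z < +oo)%E.
  move: Hcv; case Efz : (f z) => [r| |] //= Hcv. all: try by rewrite ltry.
have fzE := finE _ fz.
move: Hcv; rewrite fzE -EFinB lee_fin => Hcv.
have := HM z Hz; rewrite fzE lee_fin => hMz.
have hQz : mu / 2 * sqnorm z <= mu / 2 * Q by apply: ler_wpM2l; [rewrite divr_ge0 // ltW | exact: HQ].
pose gy := fine (f y) - mu / 2 * sqnorm y.
have key1 : Mg <= t * gy + (1 - t) * gx1 by rewrite /gy /gx1 /Mg; lra.
have key2 : Mg * (2 + rho) <= gy + (1 + rho) * gx1.
  have e : (t * gy + (1 - t) * gx1) * (2 + rho) = gy + (1 + rho) * gx1.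
    by rewrite /t; field; rewrite gt_eqF //; lra.
  rewrite -e ler_pM2r //; lra.
have key3 : C * rho <= mu / 8 * rho ^+ 2 + 2 * C ^+ 2 / mu.
  have h : 0 <= mu / 8 * (rho - 4 * C / mu) ^+ 2 by apply: mulr_ge0; [rewrite divr_ge0 // ltW | exact: sqr_ge0].
  have e : mu / 8 * (rho - 4 * C / mu) ^+ 2 = mu / 8 * rho ^+ 2 + 2 * C ^+ 2 / mu - C * rho.
    by field; rewrite gt_eqF.
  lra.
have e2 : rho ^+ 2 = sqnorm (y - x1) by rewrite /rho enorm_sq.
rewrite -e2.
have e3 : Mg * (2 + rho) - (1 + rho) * gx1 = A - C * rho by rewrite /A /C; ring.
have : gy >= A - C * rho by lra.
rewrite /gy; lra.
Qed.


Lemma exists_argmax (w : V) : exists x, (f x < +oo)%E /\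
  forall y, ((dotv w y)%:E - f y <= (dotv w x)%:E - f x)%E.
Proof.
case: Hp => [[x1 fx1] _].
have [Aq HA] := quad_lb x1 fx1.
pose B0 := Aq - mu / 4 * sqnorm x1 - 2 * sqnorm w / mu.
have coer : forall y, (f y < +oo)%E -> B0 + mu / 8 * sqnorm y <= fine (f y) - dotv w y.
  move=> y fy; have := HA y fy.
  have h1 : sqnorm (y - x1) <= 2 * sqnorm y + 2 * sqnorm x1.
    by rewrite sqnormB; have := sqnorm_ge0 (y + x1); rewrite sqnormD; lra.
  have h1' : mu / 8 * sqnorm (y - x1) <= mu / 8 * (2 * sqnorm y + 2 * sqnorm x1).
    by apply: ler_wpM2l => //; rewrite divr_ge0 // ltW.
  have mu4 : 0 < mu / 4 by rewrite divr_gt0.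
  have h2 := dot_le_young (mu / 4) w y mu4.
  have e2 : sqnorm w / (2 * (mu / 4)) = 2 * sqnorm w / mu by field; rewrite gt_eqF.
  have e1 : mu / 4 / 2 * sqnorm y = mu / 8 * sqnorm y by field.
  have e3 : mu / 8 * (2 * sqnorm y + 2 * sqnorm x1) = mu / 4 * sqnorm y + mu / 4 * sqnorm x1 by field.
  have e4 : mu / 2 * sqnorm y = mu / 4 * sqnorm y + mu / 8 * sqnorm y + mu / 8 * sqnorm y by field.
  have e5 : mu / 4 * sqnorm y = mu / 8 * sqnorm y + mu / 8 * sqnorm y by field.
  rewrite e2 e1 in h2; rewrite e3 in h1'; rewrite /B0; lra.
pose T := fine (f x1) - dotv w x1.
pose Rr := 1 + 8 * `|T - B0| / mu + \sum_(l < d) `|x1 0 l|.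
have Rr1 : 1 + 8 * `|T - B0| / mu <= Rr.
  by rewrite /Rr lerDl; apply: sumr_ge0 => l _.
have Rrg : 1 <= Rr.
  have : 0 <= 8 * `|T - B0| / mu by rewrite divr_ge0 // ?ltW // mulr_ge0.
  lra.
pose K2 := [set v : V | forall i, `[- Rr, Rr]%classic (v 0 i)].
have cK2 : compact K2 := box_compact (fun _ => - Rr) (fun _ => Rr).
have x1K : K2 x1.
  move=> i /=; rewrite in_itv /= -ler_norml.
  have : `|x1 0 i| <= \sum_(l < d) `|x1 0 l|.
    by rewrite (bigD1 i) //= lerDl; apply: sumr_ge0 => l _.
  have : 0 <= 8 * `|T - B0| / mu by rewrite divr_ge0 // ?ltW // mulr_ge0.
  rewrite /Rr; lra.
pose F := fun y => (f y - (dotv w y)%:E)%E.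
have Fninf : forall y, (-oo < F y)%E.
  move=> y; rewrite /F; have := Hninf y; case: (f y) => [r| |] //= _.
  by rewrite -EFinB ltNye.
have ne : K2 !=set0 by exists x1.
have [xm Kxm Hm] := @lsc_min_compact _ _ K2 F cK2 ne Fninf (lsc_shift f w Hninf Hl).
have FxmT : (F xm <= T%:E)%E.
  by have := Hm x1 x1K; rewrite /F (finE x1 fx1) -EFinB.
have fxm : (f xm < +oo)%E.
  by move: FxmT; rewrite /F; case: (f xm) => [r| |] //=; rewrite ?ltry // addye // leye_eq.
exists xm; split => // y.
move: FxmT; rewrite /F (finE xm fxm) -!EFinB lee_fin => FxmT.
case Efy : (f y) => [r| |].
- rewrite -EFinB lee_fin.
  have fy : (f y < +oo)%E by rewrite Efy ltry.
  case: (pselect (K2 y)) => Ky.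
    have := Hm y Ky; rewrite /F (finE xm fxm) Efy -!EFinB lee_fin; lra.
  have [i Hi] : exists i, ~ `[- Rr, Rr]%classic (y 0 i).
    apply: contrapT => H; apply: Ky => i; apply: contrapT => Hn; apply: H; by exists i.
  have Hy : Rr < `|y 0 i|.
    rewrite ltNge; apply/negP => Hle; apply: Hi => /=; rewrite in_itv /= -ler_norml //.
  have Hsq : Rr < sqnorm y.
    have := coord_le_sqnorm y i; rewrite -real_normK ?num_real //; nra.
  have := coer y fy; rewrite Efy /=.
  have : `|T - B0| < mu / 8 * sqnorm y.
    have : mu / 8 * (1 + 8 * `|T - B0| / mu) <= mu / 8 * sqnorm y.
      by apply: ler_wpM2l; [rewrite divr_ge0 // ltW | lra].
    have -> : mu / 8 * (1 + 8 * `|T - B0| / mu) = mu / 8 + `|T - B0|.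
      by field; rewrite gt_eqF.
    have : 0 < mu / 8 by rewrite divr_gt0.
    lra.
  have := ler_norm (T - B0).
  lra.
- by rewrite addeNy leNye.
- by have := Hninf y; rewrite Efy.
Qed.


Lemma gradconjP (w : V) : (f (gradconj f w) < +oo)%E /\
  forall y, ((dotv w y)%:E - f y <= (dotv w (gradconj f w))%:E - f (gradconj f w))%E.
Proof.
have [xm [fxm Hxm]] := exists_argmax w.
have H : forall y, ((dotv w y)%:E - f y <= (dotv w (gradconj f w))%:E - f (gradconj f w))%E.
  exact (@classical_sets.xgetPex _ (0 : V) [set x : V | forall y, ((dotv w y)%:E - f y <= (dotv w x)%:E - f x)%E]
            (ex_intro _ xm Hxm)).
split => //.
have := H xm; rewrite (finE xm fxm).
case: (f (gradconj f w)) => [r| |] //=.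
by move=> _; rewrite ltry.
Qed.

Lemma conjfE (w : V) : conjf f w = dotv w (gradconj f w) - fine (f (gradconj f w)).
Proof.
have [fx Hx] := gradconjP w.
rewrite /conjf.
have -> : ereal_sup [set ((dotv w x)%:E - f x)%E | x in [set: V]]
    = ((dotv w (gradconj f w))%:E - f (gradconj f w))%E.
  apply/eqP; rewrite eq_le; apply/ssrbool.andP; split.
    by apply: ge_ereal_sup => _ [y _ <-]; exact: Hx.
  by apply: ereal_sup_ubound; exists (gradconj f w).
by rewrite (finE _ fx).
Qed.

Lemma conjf_ub (w y : V) : (f y < +oo)%E -> dotv w y - fine (f y) <= conjf f w.
Proof.
move=> fy; have [fx Hx] := gradconjP w.
have := Hx y; rewrite (finE _ fx) (finE _ fy) -!EFinB lee_fin conjfE //.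
Qed.

Lemma lim_ineq (G P : R) : (forall t, 0 < t < 1 -> (1 - t) * P <= G) -> P <= G.
Proof.
move=> H.
have h12 := H (1 / 2) ltac:(apply/ssrbool.andP; split; lra).
case: (lerP P 0) => P0; first lra.
rewrite leNgt; apply/negP => GP.
pose t := (P - G) / (2 * P).
have t0 : 0 < t by rewrite /t divr_gt0 //; lra.
have t1 : t < 1.
  rewrite /t ltr_pdivrMr; lra.
have := H t ltac:(apply/ssrbool.andP; split => //).
have -> : (1 - t) * P = (P + G) / 2 by rewrite /t; field; rewrite gt_eqF.
lra.
Qed.

Lemma qgrowth (w y : V) : (f y < +oo)%E ->
  fine (f (gradconj f w)) + dotv w (y - gradconj f w)
    + mu / 2 * sqnorm (y - gradconj f w) <= fine (f y).
Proof.
move=> fy.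
have [fx Hx] := gradconjP w.
set x := gradconj f w in fx Hx *.
have H : forall t, 0 < t < 1 -> (1 - t) * (mu / 2 * sqnorm (y - x))
    <= fine (f y) - fine (f x) - dotv w (y - x).
  move=> t /ssrbool.andP[t0 t1].
  pose z := t *: y + (1 - t) *: x.
  have := Hc y x t; rewrite t0 t1 => /(_ isT).
  rewrite -/z (finE _ fy) (finE _ fx) -!EFinB -!EFinM -EFinD => Hcv.
  have fz : (f z < +oo)%E.
    move: Hcv; case Efz : (f z) => [r| |] //= Hcv. all: try by rewrite ltry.
  move: Hcv; rewrite (finE _ fz) -EFinB lee_fin => Hcv.
  have := Hx z; rewrite (finE _ fz) (finE _ fx) -!EFinB lee_fin => Hm.
  have esz : sqnorm z = t * sqnorm y + (1 - t) * sqnorm x - t * (1 - t) * sqnorm (y - x).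
    by rewrite /z (sqnormD (t *: y)) !sqnormZ (sqnormB y x) dotvZl dotvZr; ring.
  have ecz : dotv w z = t * dotv w y + (1 - t) * dotv w x.
    by rewrite /z dotvDr !dotvZr.
  have ec : dotv w (y - x) = dotv w y - dotv w x by rewrite dotvBr.
  rewrite esz in Hcv; rewrite ecz in Hm; rewrite ec.
  set fy' := fine (f y) in Hcv Hm *; set fx' := fine (f x) in Hcv Hm *.
  set fz' := fine (f z) in Hcv Hm *.
  set S := sqnorm (y - x) in Hcv *.
  have E : t * ((1 - t) * (mu / 2 * S) - (fy' - fx' - (dotv w y - dotv w x)))
     = (t * dotv w y + (1 - t) * dotv w x - dotv w x + fx' - fz')
       + (fz' - mu / 2 * (t * sqnorm y + (1 - t) * sqnorm x - t * (1 - t) * S))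
       - (t * (fy' - mu / 2 * sqnorm y) + (1 - t) * (fx' - mu / 2 * sqnorm x)).
    by field.
  have : t * ((1 - t) * (mu / 2 * S) - (fy' - fx' - (dotv w y - dotv w x))) <= 0.
    rewrite E; lra.
  by rewrite pmulr_rle0 // => h /=; lra.
have := lim_ineq _ _ H; lra.
Qed.

Lemma descent (w v : V) : conjf f v <= conjf f w + dotv (gradconj f w) (v - w)
   + (1 / mu) / 2 * sqnorm (v - w).
Proof.
rewrite (conjfE v) (conjfE w).
have [fx' _] := gradconjP v.
have Hq := qgrowth w _ fx'.
set x := gradconj f w in Hq *; set x' := gradconj f v in Hq fx' *.
have Hy := dot_le_young mu (v - w) (x' - x) mu0.
have e1 : dotv v x' - dotv w (x' - x) = dotv w x + dotv (v - w) x + dotv (v - w) (x' - x).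
  rewrite !dotvBl !dotvBr; ring.
have e2 : sqnorm (v - w) / (2 * mu) = 1 / mu / 2 * sqnorm (v - w) by field; rewrite gt_eqF.
rewrite e2 in Hy; rewrite (dotvC x).
lra.
Qed.

Lemma conjf_convex (I : finType) (P : pred I) (b : I -> R) (u : V) (v : I -> V) :
  (forall j, P j -> 0 <= b j) -> 0 <= 1 - \sum_(j | P j) b j ->
  conjf f ((1 - \sum_(j | P j) b j) *: u + \sum_(j | P j) b j *: v j)
   <= (1 - \sum_(j | P j) b j) * conjf f u + \sum_(j | P j) b j * conjf f (v j).
Proof.
move=> b0 a0.
set a := 1 - \sum_(j | P j) b j in a0 *.
set z := a *: u + _.
rewrite (conjfE z).
have [fx _] := gradconjP z.
set x := gradconj f z in fx *.
set fx' := fine (f x).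
have ez : dotv z x - fx' = a * (dotv u x - fx') + \sum_(j | P j) b j * (dotv (v j) x - fx').
  rewrite /z dotvDl dotvZl dotv_suml.
  under [X in _ = _ + X]eq_bigr do rewrite mulrBr.
  rewrite sumrB -mulr_suml.
  under eq_bigr do rewrite dotvZl.
  rewrite /a; ring.
rewrite ez; apply: lerD.
  by apply: ler_wpM2l => //; apply: conjf_ub.
by apply: ler_sum => j Pj; apply: ler_wpM2l; [exact: b0 | exact: conjf_ub].
Qed.

End Exist.
Definition HStest (R : realType) (d : nat) (fi fj : 'rV[R]_d -> \bar R)
  (L c1 c2 : R) (S1 : bool) (wi wj wb_ij wb_ji : 'rV[R]_d) : bool :=
  let xi := gradconj fi wi in
  let xj := gradconj fj wj in
  let g := xi - xj in
  let rho := Num.min (- (c1 * sqnorm g))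
                     (- (c2 * (sqnorm (wb_ij - wi) + sqnorm (wb_ji - wj)))) in
  if S1 then
    conjf fi wb_ij + conjf fj wb_ji - conjf fi wi - conjf fj wj <= rho
  else
    dotv xi (wb_ij - wi) + L / 2 * sqnorm (wb_ij - wi)
    + dotv xj (wb_ji - wj) + L / 2 * sqnorm (wb_ji - wj) <= rho.
Arguments HStest {R d}.

Definition HS (R : realType) (d : nat) (fi fj : 'rV[R]_d -> \bar R)
  (L beta c1 c2 : R) (S1 : bool) (wi wj wt_ij wt_ji D_ij D_ji : 'rV[R]_d) : 'rV[R]_d :=
  let wb_ij := wt_ij - beta *: (D_ij - D_ji) in
  let wb_ji := wt_ji - beta *: (D_ji - D_ij) in
  if HStest fi fj L c1 c2 S1 wi wj wb_ij wb_ji then wb_ij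
  else wi - beta *: (gradconj fi wi - gradconj fj wj).
Arguments HS {R d}.

Lemma half_stepE (R : realType) (n d : nat) (f : 'I_n -> 'rV[R]_d -> \bar R)
  (L beta c1 c2 : R) (S1 : bool) (adj : nat -> 'I_n -> 'I_n -> bool) (m : nat)
  (w : nat -> 'I_n -> 'rV[R]_d) (k : nat) (i j : 'I_n) (a b : nat -> R) :
  half_step f L beta c1 c2 S1 adj m w k i j a b =
  HS (f i) (f j) L beta c1 c2 S1 (w k i) (w k j)
    (\sum_(t <- mem_idx adj m k i j) a t *: w t i)
    (\sum_(t <- mem_idx adj m k i j) b t *: w t j)
    (\sum_(t <- mem_idx adj m k i j) a t *: gradconj (f i) (w t i))
    (\sum_(t <- mem_idx adj m k i j) b t *: gradconj (f j) (w t j)).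
Proof. reflexivity. Qed.

Lemma mem_idx_sym (n : nat) (adj : nat -> 'I_n -> 'I_n -> bool) m k i j :
  (forall k i j, adj k i j = adj k j i) -> mem_idx adj m k j i = mem_idx adj m k i j.
Proof. by move=> hs; rewrite /mem_idx; congr take; apply: eq_filter => t; rewrite hs. Qed.

Lemma HStest_sym (R : realType) (d : nat) (fi fj : 'rV[R]_d -> \bar R)
  (L c1 c2 : R) (S1 : bool) (wi wj wbi wbj : 'rV[R]_d) :
  HStest fj fi L c1 c2 S1 wj wi wbj wbi = HStest fi fj L c1 c2 S1 wi wj wbi wbj.
Proof.
rewrite /HStest (sqnormBC (gradconj fj wj)) (addrC (sqnorm (wbj - wj))).
by case: S1; congr (_ <= _); ring.
Qed.

Lemma HS_pair (R : realType) (d : nat) (fi fj : 'rV[R]_d -> \bar R)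
  (mu beta c1 c2 : R) (S1 : bool) (wi wj A B DA DB : 'rV[R]_d) :
  0 < mu -> proper_fun fi -> lsc_fun fi -> strongly_convex mu fi ->
  proper_fun fj -> lsc_fun fj -> strongly_convex mu fj ->
  A + B = wi + wj ->
  HS fi fj (1 / mu) beta c1 c2 S1 wi wj A B DA DB
    + HS fj fi (1 / mu) beta c1 c2 S1 wj wi B A DB DA = wi + wj /\
  conjf fi (HS fi fj (1 / mu) beta c1 c2 S1 wi wj A B DA DB)
    + conjf fj (HS fj fi (1 / mu) beta c1 c2 S1 wj wi B A DB DA)
    - conjf fi wi - conjf fj wj
  <= - (Num.min (beta * (1 - beta * (1 / mu))) c1
          * sqnorm (gradconj fi wi - gradconj fj wj)).
Proof.
move=> mu0 Hpi Hli Hci Hpj Hlj Hcj hAB.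
rewrite /HS; cbv zeta; rewrite (HStest_sym _ _ fi fj).
set wb1 := A - beta *: (DA - DB).
set wb2 := B - beta *: (DB - DA).
set xi := gradconj fi wi; set xj := gradconj fj wj.
set th := Num.min (beta * (1 - beta * (1 / mu))) c1.
have gsq := sqnorm_ge0 (xi - xj).
have thc1 : th * sqnorm (xi - xj) <= c1 * sqnorm (xi - xj).
  by apply: ler_wpM2r => //; rewrite /th ge_min lexx orbT.
have thb : th * sqnorm (xi - xj) <= beta * (1 - beta * (1 / mu)) * sqnorm (xi - xj).
  by apply: ler_wpM2r => //; rewrite /th ge_min lexx.
case E: (HStest fi fj (1 / mu) c1 c2 S1 wi wj wb1 wb2); split.
- rewrite /wb1 /wb2 -(opprB DA DB) scalerN opprK addrACA addNr addr0; exact: hAB.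
- rewrite /HStest -/xi -/xj in E.
  have rho1 : forall r : R, Num.min (- (c1 * sqnorm (xi - xj))) r <= - (c1 * sqnorm (xi - xj)).
    by move=> r; rewrite ge_min lexx.
  case: S1 E => E.
  + have := rho1 (- (c2 * (sqnorm (wb1 - wi) + sqnorm (wb2 - wj)))).
    lra.
  + have := rho1 (- (c2 * (sqnorm (wb1 - wi) + sqnorm (wb2 - wj)))).
    have D1 := descent _ _ _ _ mu0 Hpi Hli Hci wi wb1.
    have D2 := descent _ _ _ _ mu0 Hpj Hlj Hcj wj wb2.
    rewrite -/xi in D1; rewrite -/xj in D2.
    lra.
- rewrite -(opprB xi xj) scalerN !opprK addrACA addNr addr0 //.
- have D1 := descent _ _ _ _ mu0 Hpi Hli Hci wi (wi - beta *: (xi - xj)).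
  have D2 := descent _ _ _ _ mu0 Hpj Hlj Hcj wj (wj - beta *: (xj - xi)).
  rewrite -/xi in D1; rewrite -/xj in D2.
  have e1 : wi - beta *: (xi - xj) - wi = - (beta *: (xi - xj)) by rewrite addrC addKr.
  have e2 : wj - beta *: (xj - xi) - wj = - (beta *: (xj - xi)) by rewrite addrC addKr.
  rewrite e1 dotvNr dotvZr sqnormN sqnormZ in D1.
  rewrite e2 dotvNr dotvZr sqnormN sqnormZ (sqnormBC xj xi) in D2.
  have eg : dotv xi (xi - xj) + dotv xj (xj - xi) = sqnorm (xi - xj).
    by rewrite /sqnorm !dotvBl !dotvBr (dotvC xj xi); ring.
  have key : - (beta * dotv xi (xi - xj)) + 1 / mu / 2 * (beta ^+ 2 * sqnorm (xi - xj))
      + (- (beta * dotv xj (xj - xi)) + 1 / mu / 2 * (beta ^+ 2 * sqnorm (xi - xj)))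
      = - (beta * (1 - beta * (1 / mu)) * sqnorm (xi - xj)).
    by rewrite -eg; field; rewrite gt_eqF.
  lra.
Qed.

Lemma pair_sum (V : zmodType) (n : nat) (P : 'I_n -> 'I_n -> bool) (E : 'I_n -> 'I_n -> V) :
  (forall i j, P i j = P j i) -> (forall i, ~~ P i i) ->
  \sum_(i < n) \sum_(j < n | P i j) E i j
    = \sum_(i < n) \sum_(j < n | (i < j)%N && P i j) (E i j + E j i).
Proof.
move=> hs hi.
have step : forall i, \sum_(j < n | P i j) E i j =
    \sum_(j < n) (if (i < j)%N && P i j then E i j else 0)
    + \sum_(j < n) (if (j < i)%N && P i j then E i j else 0).
  move=> i; rewrite big_mkcond -big_split /=; apply: eq_bigr => j _.
  case Pij: (P i j); rewrite ?andbT ?andbF ?addr0 //.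
  case: (ltngtP i j) => h; rewrite ?addr0 ?add0r //.
  by move: Pij; rewrite (val_inj h) (negbTE (hi j)).
under eq_bigr => i _ do rewrite step.
rewrite big_split /=.
rewrite [X in _ + X]exchange_big /=.
rewrite -big_split /=; apply: eq_bigr => i _.
rewrite [RHS]big_mkcond -big_split /=; apply: eq_bigr => j _.
rewrite (hs j i).
by case: ifP => _; rewrite ?addr0.
Qed.

Lemma sum_conserve (R : realType) (n d : nat) (adj : 'I_n -> 'I_n -> bool) (h : 'I_n -> 'I_n -> R)
  (w : 'I_n -> 'rV[R]_d) (hs : 'I_n -> 'I_n -> 'rV[R]_d) :
  (forall i j, adj i j = adj j i) -> (forall i, ~~ adj i i) ->
  (forall i j, adj i j -> h i j = h j i) ->
  (forall i j, adj i j -> hs i j + hs j i = w i + w j) ->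
  \sum_(i < n) ((1 - \sum_(j | adj i j) h i j) *: w i + \sum_(j | adj i j) h i j *: hs i j)
   = \sum_(i < n) w i.
Proof.
move=> hsym hirr hh hp.
have e : forall i, (1 - \sum_(j | adj i j) h i j) *: w i + \sum_(j | adj i j) h i j *: hs i j
   = w i + \sum_(j | adj i j) h i j *: (hs i j - w i).
  move=> i; rewrite scalerBl scale1r scaler_suml.
  under [X in _ = _ + X]eq_bigr do rewrite scalerBr.
  by rewrite sumrB addrAC addrA.
under eq_bigr => i _ do rewrite e.
rewrite big_split /=.
rewrite (pair_sum _ _ _ (fun i j => h i j *: (hs i j - w i)) hsym hirr).
rewrite [X in _ + X]big1 ?addr0 // => i _; rewrite big1 // => j /andP[_ a].
rewrite (hh _ _ a) -scalerDr.
have -> : hs i j - w i + (hs j i - w j) = (hs i j + hs j i) - (w i + w j).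
  by rewrite opprD addrACA.
by rewrite hp // subrr scaler0.
Qed.

Theorem mainTheorem3 (R : realType) (n d : nat)
  (f : 'I_n -> 'rV[R]_d -> \bar R) (mu : R)
  (adj : nat -> 'I_n -> 'I_n -> bool) (h : nat -> 'I_n -> 'I_n -> R)
  (beta c1 c2 : R) (m : nat) (safeS1 : bool)
  (alpha : nat -> 'I_n -> 'I_n -> nat -> R)
  (w : nat -> 'I_n -> 'rV[R]_d) :
  (* functions f_i *)
  0 < mu ->
  (forall i, proper_fun (f i)) ->
  (forall i, lsc_fun (f i)) ->
  (forall i, strongly_convex mu (f i)) ->
  (exists x0 : 'rV[R]_d, exists2 r : R, 0 < r &
     forall y, enorm (y - x0) < r -> forall i, y \in domf (f i)) ->
  (* undirected simple graphs E^k and weights h_ij^k *)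
  (forall k i j, adj k i j = adj k j i) ->
  (forall k i, ~~ adj k i i) ->
  (forall k i j, adj k i j -> h k i j = h k j i) ->
  (forall k i j, adj k i j -> 0 < h k i j) ->
  (exists2 hlow : R, 0 < hlow & forall k i j, adj k i j -> hlow <= h k i j) ->
  (forall k i, \sum_(j | adj k i j) h k i j <= 1) ->
  (* parameters *)
  0 < beta < 1 / (1 / mu) -> 0 < c1 -> 0 < c2 -> (1 <= m)%N ->
  (* initial point *)
  \sum_(i < n) w 0%N i = 0 ->
  (* the AA coefficients are minimizers of the AA subproblems *)
  (forall k i j, adj k i j -> aa_minimizer f adj m w k i j (alpha k i j) (alpha k j i)) ->
  (* the FDGM-AA update *)
  (forall k i, w k.+1 i =
     (1 - \sum_(j | adj k i j) h k i j) *: w k i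
     + \sum_(j | adj k i j) h k i j *:
         half_step f (1 / mu) beta c1 c2 safeS1 adj m w k i j (alpha k i j) (alpha k j i)) ->
  let L := 1 / mu in
  let theta1 := Num.min (beta * (1 - beta * L)) c1 in
  (forall k, \sum_(i < n) w k i = 0 /\
     Dfun f (w k.+1) - Dfun f (w k) <=
       - (theta1 * \sum_(i < n) \sum_(j < n | (i < j)%N && adj k i j)
              h k i j * sqnorm (gradconj (f i) (w k i) - gradconj (f j) (w k j))))
  /\ (forall k, Dfun f (w k.+1) <= Dfun f (w k)).
Proof.
move=> mu0 Hp Hl Hc _ hsym hirr hhsym hpos _ hsum /andP[b0 b1] c10 c20 _ w0 Hmin Hupd L theta1.
pose hs k i j := half_step f (1 / mu) beta c1 c2 safeS1 adj m w k i j (alpha k i j) (alpha k j i).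
have Hpair : forall k i j, adj k i j ->
    hs k i j + hs k j i = w k i + w k j /\
    conjf (f i) (hs k i j) + conjf (f j) (hs k j i) - conjf (f i) (w k i) - conjf (f j) (w k j)
      <= - (theta1 * sqnorm (gradconj (f i) (w k i) - gradconj (f j) (w k j))).
  move=> k i j a.
  have [[Hfeas _] _] := Hmin k i j a.
  rewrite /hs !half_stepE (mem_idx_sym _ adj m k i j hsym).
  exact: HS_pair.
have Hsum : forall k, \sum_(i < n) w k i = 0.
  elim=> [//|k IH].
  under eq_bigr => i _ do rewrite Hupd.
  rewrite (sum_conserve _ _ _ (adj k) (h k) (w k) (hs k)) //.
  - by move=> i j; exact: (hhsym k i j).
  - by move=> i j a; case: (Hpair k i j a).
have theta0 : 0 <= theta1.
  rewrite /theta1 le_min (ltW c10) andbT.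
  have : beta * L < 1.
    have emu : 1 / (1 / mu) = mu by rewrite !div1r invrK.
    rewrite emu in b1.
    by rewrite /L mul1r ltr_pdivrMr // mul1r.
  move=> H; apply: mulr_ge0; [exact: ltW | lra].
have Hdesc : forall k, Dfun f (w k.+1) - Dfun f (w k) <=
       - (theta1 * \sum_(i < n) \sum_(j < n | (i < j)%N && adj k i j)
              h k i j * sqnorm (gradconj (f i) (w k i) - gradconj (f j) (w k j))).
  move=> k.
  have Hi : forall i, conjf (f i) (w k.+1 i) - conjf (f i) (w k i)
      <= \sum_(j | adj k i j) h k i j * (conjf (f i) (hs k i j) - conjf (f i) (w k i)).
    move=> i; rewrite Hupd.
    have := conjf_convex _ _ (f i) mu mu0 (Hp i) (Hl i) (Hc i) _ (adj k i) (h k i) (w k i) (hs k i)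
      (fun j a => ltW (hpos k i j a)) ltac:(rewrite subr_ge0; exact: hsum).
    rewrite -/(hs k i) => H.
    have e : (1 - \sum_(j | adj k i j) h k i j) * conjf (f i) (w k i)
        + \sum_(j | adj k i j) h k i j * conjf (f i) (hs k i j) - conjf (f i) (w k i)
        = \sum_(j | adj k i j) h k i j * (conjf (f i) (hs k i j) - conjf (f i) (w k i)).
      under [RHS]eq_bigr do rewrite mulrBr.
      rewrite sumrB -mulr_suml; ring.
    rewrite -e; move: H; set S := \sum_(j | adj k i j) _ *: _; lra.
  clearbody hs theta1 L.
  rewrite /Dfun -sumrB.
  apply: le_trans (ler_sum _ (fun i _ => Hi i)) _.
  rewrite (pair_sum _ _ (adj k) (fun i j => h k i j * (conjf (f i) (hs k i j) - conjf (f i) (w k i)))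
             (hsym k) (hirr k)).
  rewrite mulr_sumr -sumrN; apply: ler_sum => i _.
  rewrite mulr_sumr -sumrN; apply: ler_sum => j /andP[_ a].
  have [_ Hp2] := Hpair k i j a.
  rewrite (hhsym _ _ _ a) -(hhsym _ _ _ a) -mulrDr.
  have hp := ltW (hpos k i j a).
  have := ler_wpM2l hp Hp2.
  move: (conjf (f i) (hs k i j)) (conjf (f j) (hs k j i)) (conjf (f i) (w k i))
    (conjf (f j) (w k j)) (sqnorm (gradconj (f i) (w k i) - gradconj (f j) (w k j))) => A B C D s.
  have e1 : h k i j * (A - C + (B - D)) = h k i j * (A + B - C - D) by ring.
  have e2 : - (theta1 * (h k i j * s)) = h k i j * (- (theta1 * s)) by ring.
  by rewrite e1 e2.
split; first by move=> k; split; [exact: Hsum | exact: Hdesc].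
move=> k; have := Hdesc k.
have : 0 <= theta1 * \sum_(i < n) \sum_(j < n | (i < j)%N && adj k i j)
              h k i j * sqnorm (gradconj (f i) (w k i) - gradconj (f j) (w k j)).
  apply: mulr_ge0 => //; apply: sumr_ge0 => i _; apply: sumr_ge0 => j /andP[_ a].
  by apply: mulr_ge0; [exact: (ltW (hpos k i j a)) | exact: sqnorm_ge0].
move: (theta1 * _) => X; lra.
Qed.
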